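(* Let $\ell>1$, $c>0$, $\alpha_{acc}>0$, $0<R_{Sch}<R_{ID}$, and $A(t)=\frac{c}{\alpha_{acc}}\Big(\frac{t^{1-\ell}}{1-\ell}-\frac{1}{1-\ell}\Big)$ for $t\ge1$. Then there is $\varepsilon>0$ such that the function $r=r(t)$ given implicitly by $$R_{ID}-r-R_{Sch}\ln\Big(1-\frac{R_{ID}-r}{R_{ID}-R_{Sch}}\Big)=A(t)$$ (with $r(1)=R_{ID}$, i.e. $R_{ID}-r(t)\in[0,R_{ID}-R_{Sch})$) is well defined for all $t\in[1,\infty)$ and satisfies $r(t)\ge R_{Sch}+\varepsilon$ for all $t>1$.
   Context: This $r(t)$ describes the radial null geodesic $\frac{dr}{dt}=-\frac{c}{\alpha_{acc}}t^{-\ell}\big(1-\frac{R_{Sch}}{r}\big)$ starting at $R_{ID}$. *)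

(* Defs.v *)
From Stdlib Require Import Reals.
Open Scope R_scope.

Definition A_fun (l c alpha_acc t : R) : R :=
  c / alpha_acc * (Rpower t (1 - l) / (1 - l) - 1 / (1 - l)).

Definition implicit_lhs (R_Sch R_ID r : R) : R :=
  R_ID - r - R_Sch * ln (1 - (R_ID - r) / (R_ID - R_Sch)).

Definition is_r_at (l c alpha_acc R_Sch R_ID t r : R) : Prop :=
  0 <= R_ID - r < R_ID - R_Sch /\
  implicit_lhs R_Sch R_ID r = A_fun l c alpha_acc t.

(* Main.v *)
Require Import Defs.
From Stdlib Require Import Reals Lra Ranalysis5.
From Coquelicot Require Import Coquelicot.
Open Scope R_scope.

Lemma lhs_eq (S I r : R) : S < I -> implicit_lhs S I r = I - r - S * ln ((r - S) / (I - S)).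
Proof. intros h; unfold implicit_lhs. f_equal. f_equal. f_equal. field. lra. Qed.

Lemma A_bounds (l c a t : R) : 1 < l -> 0 < c -> 0 < a -> 1 <= t ->
  0 <= A_fun l c a t < c / (a * (l - 1)).
Proof.
  intros hl hc ha ht. unfold A_fun, Rpower.
  assert (hlt : 0 <= ln t) by (rewrite <- ln_1; apply ln_le; lra).
  set (p := exp ((1 - l) * ln t)).
  assert (hp0 : 0 < p) by apply exp_pos.
  assert (hp1 : p <= 1).
  { unfold p; destruct (Req_dec ((1-l)*ln t) 0) as [e|e].
    rewrite e, exp_0; lra. left; rewrite <- exp_0 at 2; apply exp_increasing. nra. }
  replace (c / a * (p / (1 - l) - 1 / (1 - l))) with (c / a * (1 - p) / (l - 1)) by (field; lra).
  assert (0 < c / a) by (apply Rdiv_lt_0_compat; lra).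
  split.
  - apply Rdiv_le_0_compat; [nra|lra].
  - replace (c / (a * (l - 1))) with (c / a * 1 / (l - 1)) by (field; lra).
    apply Rmult_lt_compat_r. apply Rinv_0_lt_compat; lra. nra.
Qed.

Theorem lemma2p1 (l c alpha_acc R_Sch R_ID : R)
  (hl : 1 < l) (hc : 0 < c) (ha : 0 < alpha_acc)
  (hS : 0 < R_Sch) (hSI : R_Sch < R_ID) :
  exists eps : R, 0 < eps /\
    (forall t : R, 1 <= t ->
       exists! r : R, is_r_at l c alpha_acc R_Sch R_ID t r) /\
    (forall t r : R, 1 < t -> is_r_at l c alpha_acc R_Sch R_ID t r ->
       R_Sch + eps <= r).
Proof.
  set (D := R_ID - R_Sch).
  set (K := c / (alpha_acc * (l - 1))).
  assert (hK : 0 < K).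
  { unfold K; apply Rdiv_lt_0_compat; [lra| apply Rmult_lt_0_compat; lra]. }
  set (q := exp (- K / R_Sch)).
  assert (hq0 : 0 < q) by apply exp_pos.
  assert (hq1 : q < 1).
  { unfold q; rewrite <- exp_0; apply exp_increasing.
    unfold Rdiv; rewrite Ropp_mult_distr_l_reverse. apply Ropp_lt_gt_0_contravar.
    apply Rmult_lt_0_compat; [lra| apply Rinv_0_lt_compat; lra]. }
  assert (hD : 0 < D) by (unfold D; lra).
  exists (D * q).
  assert (key : forall r, R_Sch < r <= R_Sch + D * q -> r <= R_ID ->
            K <= implicit_lhs R_Sch R_ID r).
  { intros r [h1 h2] h3. rewrite lhs_eq by lra.
    assert (hl1 : ln ((r - R_Sch) / (R_ID - R_Sch)) <= - K / R_Sch).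
    { rewrite <- (ln_exp (- K / R_Sch)). fold q.
      apply ln_le. apply Rdiv_lt_0_compat; lra.
      fold D. apply (Rmult_le_reg_r D); [lra|]. unfold Rdiv; rewrite Rmult_assoc, Rinv_l; lra. }
    assert (R_Sch * ln ((r - R_Sch) / (R_ID - R_Sch)) <= - K).
    { replace (-K) with (R_Sch * (-K / R_Sch)) by (field; lra).
      apply Rmult_le_compat_l; lra. }
    lra. }
  assert (hDq : D * q < D) by nra.
  assert (hDq0 : 0 < D * q) by (apply Rmult_lt_0_compat; lra).
  split; [nra|]. split.
  - intros t ht. destruct (A_bounds l c alpha_acc t hl hc ha ht) as [hA0 hA1]. fold K in hA1.
    set (A := A_fun l c alpha_acc t) in *.
    assert (ex : exists r, R_Sch + D * q <= r <= R_ID /\ implicit_lhs R_Sch R_ID r = A).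
    { destruct hA0 as [hA0 | hA0].
      - set (g := fun r => A - implicit_lhs R_Sch R_ID r).
        assert (hc1 : forall a, R_Sch + D * q <= a <= R_ID -> continuity_pt g a).
        { intros a0 ha0. apply continuity_pt_filterlim. apply (ex_derive_continuous (K := R_AbsRing) (V := R_NormedModule) g).
          unfold g, implicit_lhs. auto_derive. 
          assert (0 < 1 - (R_ID - a0) / (R_ID - R_Sch)); [|lra].
          replace (1 - (R_ID - a0) / (R_ID - R_Sch)) with ((a0 - R_Sch)/D) by (unfold D; field; lra).
          apply Rdiv_lt_0_compat; nra. }
        destruct (IVT_interv g (R_Sch + D * q) R_ID hc1) as [z [hz1 hz2]].
        + unfold D; nra.
        + unfold g. assert (K <= implicit_lhs R_Sch R_ID (R_Sch + D * q)) by (apply key; [split|]; unfold D in *; lra).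
          lra.
        + unfold g. rewrite lhs_eq by lra. replace ((R_ID - R_Sch) / (R_ID - R_Sch)) with 1 by (field; lra).
          rewrite ln_1. lra.
        + exists z. split; [lra|]. unfold g in hz2. lra.
      - exists R_ID. split; [unfold D in *; lra|]. rewrite lhs_eq by lra.
        replace ((R_ID - R_Sch) / (R_ID - R_Sch)) with 1 by (field; lra). rewrite ln_1. lra. }
    destruct ex as [r [hr1 hr2]].
    exists r. split.
    + split; [unfold D in *; lra| exact hr2].
    + intros r' [[h1 h2] h3]. fold A in h3.
      assert (mono : forall x y, R_Sch < x -> x < y -> y <= R_ID ->
                implicit_lhs R_Sch R_ID y < implicit_lhs R_Sch R_ID x).
      { intros x y hx hxy hy. rewrite !lhs_eq by lra.
        assert (ln ((x - R_Sch) / (R_ID - R_Sch)) < ln ((y - R_Sch) / (R_ID - R_Sch))).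
        { apply ln_increasing. apply Rdiv_lt_0_compat; lra.
          unfold Rdiv; apply Rmult_lt_compat_r; [apply Rinv_0_lt_compat|]; lra. }
        nra. }
      destruct (Rtotal_order r r') as [o|[o|o]]; [|exact o|].
      * pose proof (mono r r' ltac:(unfold D in *; lra) o ltac:(lra)). lra.
      * pose proof (mono r' r ltac:(lra) o ltac:(lra)). lra.
  - intros t r ht [[h1 h2] h3].
    destruct (A_bounds l c alpha_acc t hl hc ha ltac:(lra)) as [hA0 hA1]. fold K in hA1.
    destruct (Rle_lt_dec (R_Sch + D * q) r) as [o|o]; [exact o|].
    assert (K <= implicit_lhs R_Sch R_ID r) by (apply key; lra). lra.
Qed.
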